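(* Let $\beta,\gamma,\mu>0$, $0<p<\tfrac12$, $\delta=\beta/(\gamma+\mu)$ with $4(1-p)<\delta<\tfrac1p$. Then the Jacobian at $E_2$ of the $(S_0,S_1,A)$ subsystem of the temporary adoption model, $$J=\begin{pmatrix}-\beta A-\mu&0&-\beta S_0\\(1-p)\beta A&-\beta A-\mu&(1-p)\beta S_0-\beta S_1\\ p\beta A&\beta A&\beta(pS_0+S_1)-\gamma-\mu\end{pmatrix},$$ has exactly one eigenvalue with positive real part (which is real) and two eigenvalues with negative real part. In particular $E_2$ is a hyperbolic saddle with a one-dimensional unstable manifold.
   Context: The temporary adoption model is $S_0'=\mu-\beta S_0A-\mu S_0$, $S_1'=(1-p)\beta S_0A-\beta S_1A-\mu S_1$, $A'=\beta(pS_0+S_1)A-(\gamma+\mu)A$, $R'=\gamma A-\mu R$, with $S_0+S_1+A+R=1$. $E_2$ is the equilibrium with $A=A_2=\tfrac12(1+\tfrac{\gamma}{\mu})^{-1}\big[1-2\delta^{-1}-\sqrt{1-4(1-p)\delta^{-1}}\big]$, $S_0=1/(\delta(\frac{\gamma}{\mu}+1)A+1)$, $S_1=(1-p)\delta(\frac{\gamma}{\mu}+1)A/(\delta(\frac{\gamma}{\mu}+1)A+1)^2$, $R=\frac{\gamma}{\mu}A$. *)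

(* Defs.v *)
(* eigenvalues are taken in an arbitrary numeric algebraically
   closed field C (e.g. the complex numbers); the model parameters are real
   elements of C. *)
From HB Require Import structures.
From mathcomp Require Import all_boot all_order all_algebra.
Set Implicit Arguments. Unset Strict Implicit. Unset Printing Implicit Defensive.
Import Order.TTheory GRing.Theory Num.Theory.
Local Open Scope ring_scope.

Section TA.
Variable C : numClosedFieldType.
Variables (beta gamma mu p : C).

Definition delta : C := beta / (gamma + mu).

Definition A2 : C :=
  2^-1 * (1 + gamma / mu)^-1 *
  (1 - 2 * delta^-1 - sqrtC (1 - 4 * (1 - p) * delta^-1)).
Definition S0_2 : C := 1 / (delta * (gamma / mu + 1) * A2 + 1).
Definition S1_2 : C :=
  (1 - p) * delta * (gamma / mu + 1) * A2 / (delta * (gamma / mu + 1) * A2 + 1) ^+ 2.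
Definition R_2 : C := gamma / mu * A2.

Definition jac (S0 S1 A : C) : 'M[C]_3 :=
  \matrix_(i < 3, j < 3)
    match nat_of_ord i, nat_of_ord j with
    | 0, 0 => - beta * A - mu
    | 0, 1 => 0
    | 0, _ => - beta * S0
    | 1, 0 => (1 - p) * beta * A
    | 1, 1 => - beta * A - mu
    | 1, _ => (1 - p) * beta * S0 - beta * S1
    | _, 0 => p * beta * A
    | _, 1 => beta * A
    | _, _ => beta * (p * S0 + S1) - gamma - mu
    end.

Definition J_E2 : 'M[C]_3 := jac S0_2 S1_2 A2.
End TA.

(* Main.v *)
Require Import Defs.
From HB Require Import structures.
From mathcomp Require Import all_boot all_order all_algebra.
From mathcomp Require Import ring.
Import Order.TTheory GRing.Theory Num.Theory.
Local Open Scope ring_scope.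

Definition cub {R : comNzRingType} (a b c : R) : {poly R} :=
  'X^3 + a%:P * 'X^2 + b%:P * 'X + c%:P.

Lemma cub_coef {R : comNzRingType} (a b c : R) :
  (cub a b c)`_0 = c /\ (cub a b c)`_1 = b /\ (cub a b c)`_2 = a.
Proof. rewrite /cub !coefD !coefCM !coefXn !coefX !coefC /=; split; [|split]; ring. Qed.

Lemma cub_coef3 (R : comNzRingType) (a b c : R) : (cub a b c)`_3 = 1.
Proof. by rewrite /cub !coefD !coefCM !coefXn !coefX !coefC /= !mulr0 !addr0. Qed.

Lemma cub_prod (R : comNzRingType) (r1 r2 r3 : R) :
  ('X - r1%:P) * (('X - r2%:P) * (('X - r3%:P) * 1)) =
  cub (- (r1 + r2 + r3)) (r1 * r2 + r1 * r3 + r2 * r3) (- (r1 * r2 * r3)).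
Proof. rewrite /cub !(rmorphN, rmorphD, rmorphM) /=; ring. Qed.

Lemma cub_split (C : numClosedFieldType) (a b c : C) :
  size (cub a b c) = 4%N ->
  exists r1 r2 r3 : C, a = - (r1 + r2 + r3) /\ b = r1 * r2 + r1 * r3 + r2 * r3
    /\ c = - (r1 * r2 * r3) /\ cub a b c = ('X - r1%:P) * ('X - r2%:P) * ('X - r3%:P).
Proof.
move=> hs.
have [r hr] := closed_field_poly_normal (cub a b c).
have hl : lead_coef (cub a b c) = 1 by rewrite lead_coefE hs cub_coef3.
rewrite hl scale1r in hr.
have := congr1 (fun q : {poly C} => size q) hr; rewrite hs size_prod_XsubC.
case: r hr => [|r1 [|r2 [|r3 [|]]]] //= hr _.
rewrite !big_cons big_nil cub_prod in hr.
have [h0 [h1 h2]] := cub_coef a b c.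
have [k0 [k1 k2]] := cub_coef (- (r1 + r2 + r3)) (r1 * r2 + r1 * r3 + r2 * r3) (- (r1 * r2 * r3)).
exists r1, r2, r3; split; [|split; [|split]].
- by rewrite -h2 hr k2.
- by rewrite -h1 hr k1.
- by rewrite -h0 hr k0.
- by rewrite hr -cub_prod mulr1 mulrA.
Qed.

Lemma det33 (R : comNzRingType) (f : nat -> nat -> R) :
  \det (\matrix_(i < 3, j < 3) f i j) =
    f 0 0 * f 1 1 * f 2 2 + f 0 1 * f 1 2 * f 2 0 + f 0 2 * f 1 0 * f 2 1
  - f 0 2 * f 1 1 * f 2 0 - f 0 0 * f 1 2 * f 2 1 - f 0 1 * f 1 0 * f 2 2.
Proof.
rewrite (expand_det_row _ 0) !big_ord_recl big_ord0 /cofactor.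
rewrite !(expand_det_row _ 0) !big_ord_recl !big_ord0 /cofactor.
rewrite !det_mx11 !mxE /=.
rewrite !expr0 !expr1 !exprS !expr0 /=.
ring.
Qed.

Lemma charpoly33 (R : comNzRingType) (f : nat -> nat -> R) :
  char_poly (\matrix_(i < 3, j < 3) f i j) =
  cub (- (f 0 0 + f 1 1 + f 2 2))
      (f 0 0 * f 1 1 + f 0 0 * f 2 2 + f 1 1 * f 2 2
         - f 0 1 * f 1 0 - f 0 2 * f 2 0 - f 1 2 * f 2 1)
      (- (f 0 0 * f 1 1 * f 2 2 + f 0 1 * f 1 2 * f 2 0 + f 0 2 * f 1 0 * f 2 1
  - f 0 2 * f 1 1 * f 2 0 - f 0 0 * f 1 2 * f 2 1 - f 0 1 * f 1 0 * f 2 2)).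
Proof.
rewrite /char_poly /char_poly_mx.
have -> : 'X%:M - map_mx polyC (\matrix_(i < 3, j < 3) f i j) =
   \matrix_(i < 3, j < 3) ((nat_of_ord i == nat_of_ord j)%:R * 'X - (f i j)%:P).
  by apply/matrixP => i j; rewrite !mxE mulr_natl.
rewrite (@det33 _ (fun a b => (a == b)%:R * 'X - (f a b)%:P)) /cub /=.
rewrite !(rmorphB, rmorphD, rmorphM, rmorphN) /=.
ring.
Qed.

Section Alg.
Variable C : numClosedFieldType.
Implicit Types a b c t z : C.

Lemma pair_case a c t z : t \is Num.real -> 0 < a -> c < 0 ->
  t + z + z^* = - a -> t * (z * z^*) = - c -> 0 < t /\ 'Re z < 0.
Proof.
move=> tR a0 c0 hs hp.
have hz : 0 <= z * z^* := mul_conjC_ge0 z.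
have hpos : 0 < t * (z * z^*) by rewrite hp oppr_gt0.
have t0 : 0 < t.
  rewrite real_ltNge ?real0 //; apply/negP => ht.
  by have := lt_le_trans hpos (mulr_le0_ge0 ht hz); rewrite ltxx.
split => //.
rewrite ReE.
have -> : z + z^* = - a - t by rewrite -hs; ring.
rewrite pmulr_llt0 ?invr_gt0 ?ltr0n //.
by rewrite subr_lt0 (lt_trans _ t0) // oppr_lt0.
Qed.

Lemma real_sign {x : C} : x \is Num.real -> x != 0 -> (x < 0) || (0 < x).
Proof. by move=> xR x0; rewrite -real_neqr_lt ?real0. Qed.

Lemma all_real a c (r1 r2 r3 : C) :
  r1 \is Num.real -> r2 \is Num.real -> r3 \is Num.real -> 0 < a -> c < 0 ->
  r1 + r2 + r3 = - a -> r1 * r2 * r3 = - c ->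
  [\/ [/\ 0 < r1, r2 < 0 & r3 < 0], [/\ 0 < r2, r1 < 0 & r3 < 0]
    | [/\ 0 < r3, r1 < 0 & r2 < 0]].
Proof.
move=> R1 R2 R3 a0 c0 hs hp.
have hpos : 0 < r1 * r2 * r3 by rewrite hp oppr_gt0.
have hneg : r1 + r2 + r3 < 0 by rewrite hs oppr_lt0.
have nz : r1 * r2 * r3 != 0 by rewrite gt_eqF.
move: nz; rewrite !mulf_eq0 !negb_or => /andP[/andP[n1 n2] n3].
have F : r1 * r2 * r3 < 0 -> False by move/(lt_trans hpos); rewrite ltxx.
case/orP: (real_sign R1 n1) => s1; case/orP: (real_sign R2 n2) => s2;
  case/orP: (real_sign R3 n3) => s3.
- by exfalso; apply: F; rewrite pmulr_rlt0 // nmulr_rgt0.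
- by constructor 3.
- by constructor 2.
- by exfalso; apply: F; rewrite nmulr_rlt0 // nmulr_rlt0.
- by constructor 1.
- by exfalso; apply: F; rewrite nmulr_rlt0 // pmulr_rlt0.
- by exfalso; apply: F; rewrite pmulr_rlt0 // pmulr_rgt0.
- have : 0 < r1 + r2 + r3 by rewrite !addr_gt0.
  by move=> h; have := lt_trans hneg h; rewrite ltxx.
Qed.

Lemma sumconj_real (z : C) : z + z^* \is Num.real.
Proof. by rewrite CrealE rmorphD /= conjCK addrC. Qed.

Lemma roots3 a b c (r1 r2 r3 : C) :
  a \is Num.real -> b \is Num.real -> c \is Num.real -> 0 < a -> c < 0 ->
  a = - (r1 + r2 + r3) -> b = r1 * r2 + r1 * r3 + r2 * r3 -> c = - (r1 * r2 * r3) ->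
  exists l1 l2 l3 : C,
    ('X - l1%:P) * ('X - l2%:P) * ('X - l3%:P)
      = ('X - r1%:P) * ('X - r2%:P) * ('X - r3%:P)
    /\ l1 \is Num.real /\ 0 < l1 /\ 'Re l2 < 0 /\ 'Re l3 < 0.
Proof.
move=> aR bR cR a0 c0 ha hb hc.
have hs : r1 + r2 + r3 = - a by rewrite ha opprK.
have hp : r1 * r2 * r3 = - c by rewrite hc opprK.
have cubE z : z ^+ 3 + a * z ^+ 2 + b * z + c = (z - r1) * (z - r2) * (z - r3).
  by rewrite ha hb hc; ring.
have conjroot z : (z - r1) * (z - r2) * (z - r3) = 0 ->
    [\/ z^* = r1, z^* = r2 | z^* = r3].
  move=> hz.
  have : (z^* - r1) * (z^* - r2) * (z^* - r3) = 0.
    rewrite -cubE -(conj_Creal aR) -(conj_Creal bR) -(conj_Creal cR).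
    by rewrite -!rmorphXn -!rmorphM -!rmorphD /= cubE hz conjC0.
  move/eqP; rewrite !mulf_eq0 !subr_eq0 => /orP[/orP[]|] /eqP ->; by constructor.
have root1 : (r1 - r1) * (r1 - r2) * (r1 - r3) = 0 by rewrite subrr !mul0r.
have root2 : (r2 - r1) * (r2 - r2) * (r2 - r3) = 0 by rewrite subrr mulr0 mul0r.
have ReR (x : C) : x \is Num.real -> 'Re x = x by move/Creal_ReP.
have [R1|N1] := boolP (r1 \is Num.real).
  have [R2|N2] := boolP (r2 \is Num.real).
    have R3 : r3 \is Num.real.
      have -> : r3 = - a - r1 - r2 by rewrite -hs; ring.
      by rewrite !rpredB ?rpredN.
    case: (@all_real a c r1 r2 r3 R1 R2 R3 a0 c0 hs hp) => [[p1 n2 n3]|[p2 n1 n3]|[p3 n1 n2]].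
    - exists r1, r2, r3; do !split => //; by rewrite ReR.
    - exists r2, r1, r3; split; first ring.
      by do !split => //; rewrite ReR.
    - exists r3, r1, r2; split; first ring.
      by do !split => //; rewrite ReR.
  case: (conjroot r2 root2) => h.
  - by move: N2; rewrite -(conjCK r2) h conj_Creal ?R1.
  - by move: N2; rewrite CrealE h eqxx.
  - have [t0 hre] : 0 < r1 /\ 'Re r2 < 0.
      apply: (@pair_case a c r1 r2 R1 a0 c0); first by rewrite h.
      by rewrite h -hp mulrA.
    exists r1, r2, r3; do !split => //.
    by rewrite -h Re_conj.
case: (conjroot r1 root1) => h.
- by move: N1; rewrite CrealE h eqxx.
- have R3 : r3 \is Num.real.
    have -> : r3 = - a - (r1 + r1^*) by rewrite h -hs; ring.
    by rewrite rpredB ?rpredN // sumconj_real.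
  have [t0 hre] : 0 < r3 /\ 'Re r1 < 0.
    apply: (@pair_case a c r3 r1 R3 a0 c0); first by rewrite h -hs; ring.
    by rewrite h -hp; ring.
  exists r3, r1, r2; split; first ring.
  by do !split => //; rewrite -h Re_conj.
- have R2 : r2 \is Num.real.
    have -> : r2 = - a - (r1 + r1^*) by rewrite h -hs; ring.
    by rewrite rpredB ?rpredN // sumconj_real.
  have [t0 hre] : 0 < r2 /\ 'Re r1 < 0.
    apply: (@pair_case a c r2 r1 R2 a0 c0); first by rewrite h -hs; ring.
    by rewrite h -hp; ring.
  exists r2, r1, r3; split; first ring.
  by do !split => //; rewrite -h Re_conj.
Qed.
End Alg.

Lemma facts (C : numClosedFieldType) (d p : C) :
  0 < d -> 0 < p -> p < 2^-1 -> 4 * (1 - p) < d -> d < p^-1 ->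
  let s := sqrtC (1 - 4 * (1 - p) * d^-1) in
  let y := d * (1 - 2 * d^-1 - s) / 2 in
   0 < y /\ 0 < 1 - 2 * p - y /\ d * (p + y) = (1 + y) ^+ 2.
Proof.
move=> d0 p0 ph hd1 hd2 /=.
have dn : d != 0 by rewrite gt_eqF.
have hp1 : 0 < 1 - 2 * p.
  have -> : 1 - 2 * p = 2 * (2^-1 - p) by field.
  by rewrite mulr_gt0 ?ltr0n // subr_gt0.
have q1 : 0 < 1 - p.
  have -> : 1 - p = (1 - 2 * p) + p by ring.
  by rewrite addr_gt0.
have hd4 : 0 < d - 4 * (1 - p) by rewrite subr_gt0.
have hpd : 0 < 1 - p * d.
  by have := hd2; rewrite -(ltr_pM2l p0) mulfV ?gt_eqF // => h; rewrite subr_gt0.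
have [w hw] : exists w, w = 1 - 4 * (1 - p) * d^-1 by eexists.
rewrite -hw.
have w0 : 0 < w.
  have -> : w = (d - 4 * (1 - p)) / d by rewrite hw; field.
  by rewrite divr_gt0.
have w1 : 0 < 1 - w.
  have -> : 1 - w = 4 * (1 - p) / d by rewrite hw; ring.
  by rewrite divr_gt0 // mulr_gt0 ?ltr0n.
move: (sqrtC w) (sqrtC_ge0 w) (sqrtCK w) => s; rewrite (ltW w0) => s0 s2.
have ws : w < s.
  rewrite -ltr_sqr ?nnegrE ?(ltW w0) // s2 -subr_gt0.
  have -> : w - w ^+ 2 = w * (1 - w) by ring.
  by rewrite mulr_gt0.
have e0 : 0 < 1 - 2 * d^-1.
  have -> : 1 - 2 * d^-1 = ((d - 4 * (1 - p)) + 2 * (1 - 2 * p)) / d by field.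
  by rewrite divr_gt0 // addr_gt0 // mulr_gt0 ?ltr0n.
have se : s < 1 - 2 * d^-1.
  rewrite -ltr_sqr ?nnegrE ?(ltW e0) // s2 -subr_gt0.
  have -> : (1 - 2 * d^-1) ^+ 2 - w = 4 / d ^+ 2 * (1 - p * d) by rewrite hw; field.
  by rewrite mulr_gt0 // divr_gt0 ?ltr0n // exprn_gt0.
split; [|split].
- by rewrite divr_gt0 ?ltr0n // mulr_gt0 // subr_gt0.
- have -> : 1 - 2 * p - d * (1 - 2 * d^-1 - s) / 2 = d * (s - w) / 2.
    by rewrite hw; field.
  by rewrite divr_gt0 ?ltr0n // mulr_gt0 // subr_gt0.
- apply/eqP; rewrite -subr_eq0; apply/eqP.
  have -> : d * (p + d * (1 - 2 * d^-1 - s) / 2) - (1 + d * (1 - 2 * d^-1 - s) / 2) ^+ 2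
     = - (d ^+ 2 / 4) * (s ^+ 2 - w) by rewrite hw; field.
  by rewrite s2 subrr mulr0.
Qed.



Lemma finish (C : numClosedFieldType) (a b c : C) :
  a \is Num.real -> b \is Num.real -> c \is Num.real -> 0 < a -> c < 0 ->
  size (cub a b c) = 4%N ->
  exists l1 l2 l3 : C,
    cub a b c = ('X - l1%:P) * ('X - l2%:P) * ('X - l3%:P)
    /\ l1 \is Num.real /\ 0 < l1 /\ 'Re l2 < 0 /\ 'Re l3 < 0.
Proof.
move=> aR bR cR a0 c0 hs.
have [r1 [r2 [r3 [ha [hb [hc E]]]]]] := @cub_split C a b c hs.
have [l1 [l2 [l3 [E2 rest]]]] := @roots3 C a b c r1 r2 r3 aR bR cR a0 c0 ha hb hc.
by exists l1, l2, l3; rewrite E -E2.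
Qed.

Section RealT.
Variable C : numClosedFieldType.
Implicit Types x z : C.
Lemma rlD x z : x \is Num.real -> z \is Num.real -> x + z \is Num.real.
Proof. exact: rpredD. Qed.
Lemma rlB x z : x \is Num.real -> z \is Num.real -> x - z \is Num.real.
Proof. exact: rpredB. Qed.
Lemma rlM x z : x \is Num.real -> z \is Num.real -> x * z \is Num.real.
Proof. exact: rpredM. Qed.
Lemma rlN x : x \is Num.real -> - x \is Num.real.
Proof. by rewrite rpredN. Qed.
Lemma rlV x : x \is Num.real -> x^-1 \is Num.real.
Proof. by rewrite rpredV. Qed.
Lemma rlX x n : x \is Num.real -> x ^+ n \is Num.real.
Proof. exact: rpredX. Qed.
Lemma rl1 : (1 : C) \is Num.real. Proof. exact: rpred1. Qed.
Lemma rl0 : (0 : C) \is Num.real. Proof. exact: rpred0. Qed.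
End RealT.

Lemma eq_real (C : numClosedFieldType) (x z : C) : x = z -> z \is Num.real -> x \is Num.real.
Proof. by move=> ->. Qed.
Lemma eq_gt0 (C : numClosedFieldType) (x z : C) : x = z -> 0 < z -> 0 < x.
Proof. by move=> ->. Qed.
Lemma eq_lt0 (C : numClosedFieldType) (x z : C) : x = z -> z < 0 -> x < 0.
Proof. by move=> ->. Qed.

Definition jacf (C : numClosedFieldType) (beta gamma mu p S0 S1 A : C) (i j : nat) : C :=
    match i, j with
    | 0, 0 => - beta * A - mu
    | 0, 1 => 0
    | 0, _ => - beta * S0
    | 1, 0 => (1 - p) * beta * A
    | 1, 1 => - beta * A - mu
    | 1, _ => (1 - p) * beta * S0 - beta * S1
    | _, 0 => p * beta * A
    | _, 1 => beta * A
    | _, _ => beta * (p * S0 + S1) - gamma - mu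
    end.

Theorem mainTheorem7 (C : numClosedFieldType) (beta gamma mu p : C) :
  beta \is Num.real -> gamma \is Num.real -> mu \is Num.real -> p \is Num.real ->
  0 < beta -> 0 < gamma -> 0 < mu -> 0 < p -> p < 2^-1 ->
  4 * (1 - p) < delta beta gamma mu -> delta beta gamma mu < p^-1 ->
  exists l1 l2 l3 : C,
    char_poly (J_E2 beta gamma mu p)
      = ('X - l1%:P) * ('X - l2%:P) * ('X - l3%:P)
    /\ l1 \is Num.real /\ 0 < l1 /\ 'Re l2 < 0 /\ 'Re l3 < 0.
Proof.
move=> bR gR mR pR b0 g0 m0 p0 ph hd1 hd2.
have hgm : 0 < gamma + mu by rewrite addr_gt0.
have d0 : 0 < delta beta gamma mu by rewrite /delta divr_gt0.
have := @facts C _ _ d0 p0 ph hd1 hd2 => /=.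
have [y hy] : exists y, y = delta beta gamma mu *
   (1 - 2 * (delta beta gamma mu)^-1 -
    sqrtC (1 - 4 * (1 - p) * (delta beta gamma mu)^-1)) / 2 by eexists.
rewrite -hy => -[y0 [y1 hq]].
have bn : beta != 0 by rewrite gt_eqF.
have mn : mu != 0 by rewrite gt_eqF.
have gmn : gamma + mu != 0 by rewrite gt_eqF.
have y1n : 1 + y != 0 by rewrite gt_eqF // addr_gt0.
have hA : A2 beta gamma mu p = mu * y / beta.
  by rewrite /A2 hy /delta; field; rewrite bn gmn mn.
have hx : delta beta gamma mu * (gamma / mu + 1) * A2 beta gamma mu p = y.
  by rewrite hA /delta; field; rewrite bn gmn mn.
have hS0 : S0_2 beta gamma mu p = 1 / (1 + y) by rewrite /S0_2 hx addrC.
have hS1 : S1_2 beta gamma mu p = (1 - p) * y / (1 + y) ^+ 2.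
  by rewrite /S1_2 hx [y + 1]addrC; congr (_ / _); rewrite -hx; ring.
have hj22 : beta * (p * S0_2 beta gamma mu p + S1_2 beta gamma mu p) - gamma - mu = 0.
  rewrite hS0 hS1.
  have -> : beta * (p * (1 / (1 + y)) + (1 - p) * y / (1 + y) ^+ 2) - gamma - mu
     = (gamma + mu) / (1 + y) ^+ 2 * (delta beta gamma mu * (p + y) - (1 + y) ^+ 2).
    by rewrite /delta; field; rewrite y1n gmn.
  by rewrite hq subrr mulr0.
have E : J_E2 beta gamma mu p = \matrix_(i < 3, j < 3)
   @jacf C beta gamma mu p (S0_2 beta gamma mu p) (S1_2 beta gamma mu p) (A2 beta gamma mu p) i j
   by [].
have hs := size_char_poly (J_E2 beta gamma mu p).
rewrite E charpoly33 /= hj22 in hs *.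
apply: finish => //.
all: rewrite ?hA ?hS0 ?hS1.
- apply: (@eq_real _ _ (2 * mu * (1 + y))); first by field.
  by apply: gtr0_real; rewrite !mulr_gt0 ?ltr0n // addr_gt0.
- have yR : y \is Num.real by apply: gtr0_real.
  by repeat first [apply: rlD | apply: rlB | apply: rlN | apply: rlM
         | apply: rlV | apply: rlX | apply: rl1 | apply: rl0 | assumption].
- apply: (@eq_real _ _ (- (beta * mu ^+ 2 * y * (1 - 2 * p - y) / (1 + y)))).
    by field; rewrite bn y1n.
  by apply: ltr0_real; rewrite oppr_lt0 divr_gt0 // ?addr_gt0 // !mulr_gt0 // ?exprn_gt0.
- apply: (@eq_gt0 _ _ (2 * mu * (1 + y))); first by field.
  by rewrite !mulr_gt0 ?ltr0n // addr_gt0.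
- apply: (@eq_lt0 _ _ (- (beta * mu ^+ 2 * y * (1 - 2 * p - y) / (1 + y)))).
    by field; rewrite bn y1n.
  by rewrite oppr_lt0 divr_gt0 // ?addr_gt0 // !mulr_gt0 // ?exprn_gt0.
Qed.
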